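(* Let $f\colon M\to\mathbb H$ be a minimal conformal immersion with conjugate surface $f^*$, and let $\hat f$ be its simple factor dressing with parameters $(\mu,m,n)$, $\mu\in\mathbb C\setminus\{0,1\}$, $m,n\in\mathbb H_*$. Then $\hat f$ is a minimal surface in $\mathbb H$; $\hat f$ is unchanged if $(\mu,m,n)$ is replaced by $(\mu,mz,nw)$ for any $z,w\in\mathbb C_*$ or by $(\bar\mu^{-1},mj,nj)$; and if $\mu\in S^1\setminus\{1\}$ then $\hat f=f$.
   Context: Quaternions $\mathbb H$, $\mathbb H_*=\mathbb H\setminus\{0\}$, $\mathbb C=\operatorname{span}_{\mathbb R}\{1,i\}\subset\mathbb H$, $\mathbb C_*=\mathbb C\setminus\{0\}$. $M$ Riemann surface, $\tilde M$ universal cover, $*\omega(X)=\omega(JX)$; a conjugate surface of minimal $f$ is $f^*\colon\tilde M\to\mathbb H$ with $df^*=-*df$. Simple factor dressing: for $\mu\in\mathbb C\setminus\{0,1\}$ put $a=\frac{\mu+\mu^{-1}}2$, $b=i\frac{\mu^{-1}-\mu}2$; for $m,n\in\mathbb H_*$ the simple factor dressing of $f$ with parameters $(\mu,m,n)$ is $$\hat f=-f\frac{m(a-1)m^{-1}}2+f^*\frac{mbm^{-1}}2-n\frac{b}{a-1}n^{-1}\Big(f\frac{mbm^{-1}}2+f^*\frac{m(a-1)m^{-1}}2\Big)\colon\tilde M\to\mathbb H;$$ for $m=n=1$ it is denoted $f^\mu$ (simple factor dressing with parameter $\mu$). *)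

(* Defs.v *)
From Stdlib Require Import Reals.
Open Scope R_scope.

(** Quaternions H = R^4 with basis 1, i, j, k. *)
Record quat := mkQ { q0 : R; q1 : R; q2 : R; q3 : R }.

Definition qzero : quat := mkQ 0 0 0 0.
Definition qone  : quat := mkQ 1 0 0 0.
Definition qi    : quat := mkQ 0 1 0 0.
Definition qj    : quat := mkQ 0 0 1 0.

Definition qadd (p q : quat) : quat :=
  mkQ (q0 p + q0 q) (q1 p + q1 q) (q2 p + q2 q) (q3 p + q3 q).
Definition qopp (p : quat) : quat := mkQ (- q0 p) (- q1 p) (- q2 p) (- q3 p).
Definition qsub (p q : quat) : quat := qadd p (qopp q).
Definition qscale (r : R) (p : quat) : quat :=
  mkQ (r * q0 p) (r * q1 p) (r * q2 p) (r * q3 p).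
Definition qmul (p q : quat) : quat :=
  mkQ (q0 p * q0 q - q1 p * q1 q - q2 p * q2 q - q3 p * q3 q)
      (q0 p * q1 q + q1 p * q0 q + q2 p * q3 q - q3 p * q2 q)
      (q0 p * q2 q - q1 p * q3 q + q2 p * q0 q + q3 p * q1 q)
      (q0 p * q3 q + q1 p * q2 q - q2 p * q1 q + q3 p * q0 q).
Definition qconj (p : quat) : quat := mkQ (q0 p) (- q1 p) (- q2 p) (- q3 p).
Definition qdot (p q : quat) : R :=
  q0 p * q0 q + q1 p * q1 q + q2 p * q2 q + q3 p * q3 q.
Definition qnorm2 (p : quat) : R := qdot p p.
Definition qinv (p : quat) : quat := qscale (/ qnorm2 p) (qconj p).

(** C = span_R{1,i} inside H *)
Definition is_complex (z : quat) : Prop := q2 z = 0 /\ q3 z = 0.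

(** Partial derivatives of maps R^2 -> H (componentwise). Points of the
    domain are (x,y), identified with x + i y in C; J d/dx = d/dy. *)
Definition has_dx (g : R -> R -> quat) (x y : R) (d : quat) : Prop :=
  derivable_pt_lim (fun t => q0 (g t y)) x (q0 d) /\
  derivable_pt_lim (fun t => q1 (g t y)) x (q1 d) /\
  derivable_pt_lim (fun t => q2 (g t y)) x (q2 d) /\
  derivable_pt_lim (fun t => q3 (g t y)) x (q3 d).
Definition has_dy (g : R -> R -> quat) (x y : R) (d : quat) : Prop :=
  derivable_pt_lim (fun t => q0 (g x t)) y (q0 d) /\
  derivable_pt_lim (fun t => q1 (g x t)) y (q1 d) /\
  derivable_pt_lim (fun t => q2 (g x t)) y (q2 d) /\
  derivable_pt_lim (fun t => q3 (g x t)) y (q3 d).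

(** Open subsets of R^2 = C (a coordinate domain of the Riemann surface). *)
Definition open2 (U : R -> R -> Prop) : Prop :=
  forall x y, U x y -> exists eps, 0 < eps /\
    (forall x' y', (x' - x) ^ 2 + (y' - y) ^ 2 < eps ^ 2 -> U x' y').

Definition cont2 (h : R -> R -> quat) (x y : R) : Prop :=
  forall eps, 0 < eps -> exists del, 0 < del /\
    (forall x' y', (x' - x) ^ 2 + (y' - y) ^ 2 < del ^ 2 ->
      qnorm2 (qsub (h x' y') (h x y)) < eps ^ 2).

(** A minimal conformal immersion g : U -> H, U open in C with conformal
    coordinate z = x + i y: g is C^2 on U (all second partials exist and
    are continuous), conformal (|g_x| = |g_y|, <g_x, g_y> = 0), an immersion
    (g_x <> 0), and minimal, which for a conformal immersion means harmonic:
    g_xx + g_yy = 0. *)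
Definition minimal_conformal_immersion (U : R -> R -> Prop)
    (g : R -> R -> quat) : Prop :=
  exists gx gy gxx gxy gyx gyy : R -> R -> quat,
    forall x y, U x y ->
      has_dx g x y (gx x y) /\ has_dy g x y (gy x y) /\
      has_dx gx x y (gxx x y) /\ has_dy gx x y (gxy x y) /\
      has_dx gy x y (gyx x y) /\ has_dy gy x y (gyy x y) /\
      cont2 gxx x y /\ cont2 gxy x y /\ cont2 gyx x y /\ cont2 gyy x y /\
      qadd (gxx x y) (gyy x y) = qzero /\
      qnorm2 (gx x y) = qnorm2 (gy x y) /\
      qdot (gx x y) (gy x y) = 0 /\
      gx x y <> qzero.

(** gs is a conjugate surface of g on U:  d gs = - * d g, where
    *w(X) = w(JX), J d/dx = d/dy.  So gs_x = - g_y and gs_y = g_x. *)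
Definition conjugate_surface (U : R -> R -> Prop)
    (g gs : R -> R -> quat) : Prop :=
  forall x y, U x y ->
    (forall d, has_dy g x y d -> has_dx gs x y (qopp d)) /\
    (forall d, has_dx g x y d -> has_dy gs x y d).

Definition sfd_a (mu : quat) : quat := qscale (/ 2) (qadd mu (qinv mu)).
Definition sfd_b (mu : quat) : quat :=
  qmul qi (qscale (/ 2) (qsub (qinv mu) mu)).

Definition simple_factor_dressing (g gs : R -> R -> quat) (mu m n : quat)
    : R -> R -> quat :=
  fun x y =>
    let a1 := qsub (sfd_a mu) qone in
    let b := sfd_b mu in
    let mA := qmul (qmul m a1) (qinv m) in
    let mB := qmul (qmul m b) (qinv m) in
    let nC := qmul (qmul n (qmul b (qinv a1))) (qinv n) in
    qsub
      (qadd (qopp (qscale (/ 2) (qmul (g x y) mA)))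
            (qscale (/ 2) (qmul (gs x y) mB)))
      (qmul nC
        (qadd (qscale (/ 2) (qmul (g x y) mB))
              (qscale (/ 2) (qmul (gs x y) mA)))).

(* Main.v *)
Require Import Defs.
From Stdlib Require Import Reals Lra Psatz FunctionalExtensionality.
Open Scope R_scope.

Lemma quat_eq (a b : quat) : q0 a = q0 b -> q1 a = q1 b -> q2 a = q2 b -> q3 a = q3 b -> a = b.
Proof. destruct a, b; simpl; intros; subst; reflexivity. Qed.

Ltac qext := apply quat_eq; simpl.
Ltac qd := repeat match goal with q : quat |- _ => destruct q end.

Lemma qmul_assoc a b c : qmul (qmul a b) c = qmul a (qmul b c).
Proof. qd; qext; ring. Qed.
Lemma qmul_addl a b c : qmul (qadd a b) c = qadd (qmul a c) (qmul b c).
Proof. qd; qext; ring. Qed.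
Lemma qmul_addr a b c : qmul a (qadd b c) = qadd (qmul a b) (qmul a c).
Proof. qd; qext; ring. Qed.
Lemma qmul_subl a b c : qmul (qsub a b) c = qsub (qmul a c) (qmul b c).
Proof. qd; qext; ring. Qed.
Lemma qmul_subr a b c : qmul a (qsub b c) = qsub (qmul a b) (qmul a c).
Proof. qd; qext; ring. Qed.
Lemma qmul_oppl a b : qmul (qopp a) b = qopp (qmul a b).
Proof. qd; qext; ring. Qed.
Lemma qmul_oppr a b : qmul a (qopp b) = qopp (qmul a b).
Proof. qd; qext; ring. Qed.
Lemma qmul_scalel r a b : qmul (qscale r a) b = qscale r (qmul a b).
Proof. qd; qext; ring. Qed.
Lemma qmul_scaler r a b : qmul a (qscale r b) = qscale r (qmul a b).
Proof. qd; qext; ring. Qed.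
Lemma qmul_1l a : qmul qone a = a.
Proof. qd; qext; ring. Qed.
Lemma qmul_1r a : qmul a qone = a.
Proof. qd; qext; ring. Qed.

Lemma qnorm2_pos a : a <> qzero -> 0 < qnorm2 a.
Proof.
  destruct a as [a0 a1 a2 a3]; unfold qnorm2, qdot; simpl; intro H.
  destruct (Req_dec a0 0); destruct (Req_dec a1 0); destruct (Req_dec a2 0); destruct (Req_dec a3 0);
  try (subst; exfalso; apply H; reflexivity); nra.
Qed.
Lemma qnorm2_ge0 a : 0 <= qnorm2 a.
Proof. destruct a; unfold qnorm2, qdot; simpl; nra. Qed.
Lemma qnorm2_zero a : qnorm2 a = 0 -> a = qzero.
Proof. intro H. destruct (Req_dec 0 0). destruct a as [a0 a1 a2 a3]; unfold qnorm2, qdot in H; simpl in H.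
  assert (a0 = 0) by nra; assert (a1 = 0) by nra; assert (a2 = 0) by nra; assert (a3 = 0) by nra; subst; reflexivity. congruence. Qed.

Lemma qinv_r a : a <> qzero -> qmul a (qinv a) = qone.
Proof. intro H; pose proof (qnorm2_pos a H) as P. destruct a; unfold qinv, qnorm2, qdot in *; simpl in *; qext; field; lra. Qed.
Lemma qinv_l a : a <> qzero -> qmul (qinv a) a = qone.
Proof. intro H; pose proof (qnorm2_pos a H) as P. destruct a; unfold qinv, qnorm2, qdot in *; simpl in *; qext; field; lra. Qed.
Lemma qinv_mul a b : a <> qzero -> b <> qzero -> qinv (qmul a b) = qmul (qinv b) (qinv a).
Proof. intros Ha Hb; pose proof (qnorm2_pos a Ha) as P; pose proof (qnorm2_pos b Hb) as P'.
  destruct a, b; unfold qinv, qnorm2, qdot in *; simpl in *; qext; field; nra. Qed.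
Lemma qnorm2_mul a b : qnorm2 (qmul a b) = qnorm2 a * qnorm2 b.
Proof. qd; unfold qnorm2, qdot; simpl; ring. Qed.
Lemma qdot_mull a u v : qdot (qmul a u) (qmul a v) = qnorm2 a * qdot u v.
Proof. qd; unfold qnorm2, qdot; simpl; ring. Qed.
Lemma qdot_mulr a u v : qdot (qmul u a) (qmul v a) = qnorm2 a * qdot u v.
Proof. qd; unfold qnorm2, qdot; simpl; ring. Qed.
Lemma qmul_nz a b : a <> qzero -> b <> qzero -> qmul a b <> qzero.
Proof. intros Ha Hb E. pose proof (qnorm2_pos a Ha); pose proof (qnorm2_pos b Hb).
  assert (qnorm2 (qmul a b) = 0) by (rewrite E; unfold qnorm2,qdot; simpl; ring).
  rewrite qnorm2_mul in H1. nra. Qed.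
Lemma qinv_nz a : a <> qzero -> qinv a <> qzero.
Proof. intros H E. pose proof (qinv_r a H). rewrite E in H0. qd. simpl in H0. unfold qone in H0. injection H0. lra. Qed.

Definition Lin (P Q N v w : quat) : quat :=
  qsub (qadd (qopp (qscale (/ 2) (qmul v P))) (qscale (/ 2) (qmul w Q)))
       (qmul N (qadd (qscale (/ 2) (qmul v Q)) (qscale (/ 2) (qmul w P)))).

Lemma sfd_Lin g gs mu m n x y :
  simple_factor_dressing g gs mu m n x y =
  Lin (qmul (qmul m (qsub (sfd_a mu) qone)) (qinv m))
      (qmul (qmul m (sfd_b mu)) (qinv m))
      (qmul (qmul n (qmul (sfd_b mu) (qinv (qsub (sfd_a mu) qone)))) (qinv n))
      (g x y) (gs x y).
Proof. reflexivity. Qed.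

Lemma cancel_l n x : n <> qzero -> qmul n (qmul (qinv n) x) = x.
Proof. intro H. rewrite <- qmul_assoc, qinv_r by exact H. apply qmul_1l. Qed.

Ltac qnorm := repeat first [ rewrite qmul_subl | rewrite qmul_subr | rewrite qmul_addl | rewrite qmul_addr
  | rewrite qmul_oppl | rewrite qmul_oppr | rewrite qmul_scalel | rewrite qmul_scaler | rewrite qmul_assoc ].

Lemma Lin_red m n A B C v w : m <> qzero -> n <> qzero ->
  Lin (qmul (qmul m A) (qinv m)) (qmul (qmul m B) (qinv m)) (qmul (qmul n C) (qinv n)) v w =
  qmul (qmul n (Lin A B C (qmul (qmul (qinv n) v) m) (qmul (qmul (qinv n) w) m))) (qinv m).
Proof.
  intros Hm Hn. unfold Lin. qnorm. rewrite !cancel_l by exact Hn. reflexivity.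
Qed.

Lemma Lin_add P Q N a b c d : qadd (Lin P Q N a b) (Lin P Q N c d) = Lin P Q N (qadd a c) (qadd b d).
Proof. unfold Lin; qd; qext; ring. Qed.
Lemma Lin_00 P Q N : Lin P Q N qzero qzero = qzero.
Proof. unfold Lin; qd; qext; ring. Qed.

Lemma alg0_solve A0 A1 C0 C1 :
  qadd (mkQ A0 A1 0 0) (qmul (mkQ C0 C1 0 0) (qmul (mkQ C0 C1 0 0) (mkQ A0 A1 0 0))) = mkQ (-2) 0 0 0 ->
  let s := 1 + C0*C0 - C1*C1 in let t := 2*C0*C1 in
  s*s + t*t <> 0 /\ A0 = -2*s/(s*s+t*t) /\ A1 = 2*t/(s*s+t*t).
Proof.
  intros H s t. injection H. intros _ _ H2 H1.
  assert (E1 : A0*s - A1*t = -2) by (unfold s,t; nra).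
  assert (E2 : A0*t + A1*s = 0) by (unfold s,t; nra).
  assert (Z : s*s+t*t <> 0). { intro Z. assert (s = 0) by nra. assert (t = 0) by nra. subst. nra. }
  split; [exact Z|]. split; (apply (Rmult_eq_reg_r (s*s+t*t)); [|exact Z]); unfold Rdiv; rewrite Rmult_assoc, Rinv_l by exact Z.
  - replace (A0*(s*s+t*t)) with (s*(A0*s - A1*t) + t*(A0*t + A1*s)) by ring. rewrite E1, E2; ring.
  - replace (A1*(s*s+t*t)) with (s*(A0*t + A1*s) - t*(A0*s - A1*t)) by ring. rewrite E1, E2; ring.
Qed.

Lemma alg0 A0 A1 C0 C1 u v :
  qadd (mkQ A0 A1 0 0) (qmul (mkQ C0 C1 0 0) (qmul (mkQ C0 C1 0 0) (mkQ A0 A1 0 0))) = mkQ (-2) 0 0 0 ->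
  let A := mkQ A0 A1 0 0 in let C := mkQ C0 C1 0 0 in let B := qmul C A in
  qnorm2 (Lin A B C u (qopp v)) - qnorm2 (Lin A B C v u) = qnorm2 u - qnorm2 v /\
  qdot (Lin A B C u (qopp v)) (Lin A B C v u) = qdot u v.
Proof.
  intros H A C B. destruct (alg0_solve _ _ _ _ H) as (Z & HA0 & HA1).
  unfold B, A, C; clear A B C H; subst A0 A1. destruct u, v. unfold Lin, qnorm2, qdot; simpl.
  split; field; exact Z. Qed.

Lemma alg0_inj A0 A1 C0 C1 u v :
  qadd (mkQ A0 A1 0 0) (qmul (mkQ C0 C1 0 0) (qmul (mkQ C0 C1 0 0) (mkQ A0 A1 0 0))) = mkQ (-2) 0 0 0 ->
  let A := mkQ A0 A1 0 0 in let C := mkQ C0 C1 0 0 in let B := qmul C A in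
  Lin A B C u (qopp v) = qzero -> Lin A B C v u = qzero -> u = qzero.
Proof.
  intros H A C B HX HY. destruct (alg0_solve _ _ _ _ H) as (Z & HA0 & HA1).
  set (s := 1 + C0*C0 - C1*C1) in *. set (t := 2*C0*C1) in *.
  assert (I0 : q0 u = q0 (Lin A B C u (qopp v))).
  { unfold B, A, C; clear - Z HA0 HA1; subst A0 A1; destruct u, v; unfold Lin; simpl. unfold s, t in *. field. exact Z. }
  assert (I1 : q1 u = q1 (Lin A B C u (qopp v))).
  { unfold B, A, C; clear - Z HA0 HA1; subst A0 A1; destruct u, v; unfold Lin; simpl. unfold s, t in *. field. exact Z. }
  assert (I2 : s * q2 u - t * q3 u = (1 + C0*C0 + C1*C1) * q2 (Lin A B C u (qopp v)) - 2*C1 * q3 (Lin A B C v u)).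
  { unfold B, A, C; clear - Z HA0 HA1; subst A0 A1; destruct u, v; unfold Lin; simpl. unfold s, t in *. field. exact Z. }
  assert (I3 : t * q2 u + s * q3 u = (1 + C0*C0 + C1*C1) * q3 (Lin A B C u (qopp v)) + 2*C1 * q2 (Lin A B C v u)).
  { unfold B, A, C; clear - Z HA0 HA1; subst A0 A1; destruct u, v; unfold Lin; simpl. unfold s, t in *. field. exact Z. }
  rewrite HX, HY in *. simpl in *.
  assert (J2 : s * q2 u - t * q3 u = 0) by lra. assert (J3 : t * q2 u + s * q3 u = 0) by lra.
  assert (K2 : (s*s+t*t) * q2 u = 0) by (replace ((s*s+t*t) * q2 u) with (s*(s * q2 u - t * q3 u) + t*(t * q2 u + s * q3 u)) by ring; rewrite J2, J3; ring).
  assert (K3 : (s*s+t*t) * q3 u = 0) by (replace ((s*s+t*t) * q3 u) with (s*(t * q2 u + s * q3 u) - t*(s * q2 u - t * q3 u)) by ring; rewrite J2, J3; ring).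
  apply Rmult_integral in K2; apply Rmult_integral in K3.
  destruct K2 as [K2|K2]; [contradiction|]. destruct K3 as [K3|K3]; [contradiction|].
  destruct u; simpl in *; apply quat_eq; simpl; lra.
Qed.

Lemma H1_of (a0 a1 b0 b1 : R) : a0*a0+a1*a1 <> 0 ->
  a0*a0 - a1*a1 + b0*b0 - b1*b1 + 2*a0 = 0 -> 2*a0*a1 + 2*b0*b1 + 2*a1 = 0 ->
  qadd (mkQ a0 a1 0 0) (qmul (mkQ ((b0*a0 + b1*a1)/(a0*a0+a1*a1)) ((b1*a0 - b0*a1)/(a0*a0+a1*a1)) 0 0)
    (qmul (mkQ ((b0*a0 + b1*a1)/(a0*a0+a1*a1)) ((b1*a0 - b0*a1)/(a0*a0+a1*a1)) 0 0) (mkQ a0 a1 0 0)))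
  = mkQ (-2) 0 0 0.
Proof.
  intros Hn E0 E1. qext.
  - match goal with |- ?L = _ => assert (G : L - (-2) =
      ((a0*a0 - a1*a1 + b0*b0 - b1*b1 + 2*a0) * a0 + (2*a0*a1 + 2*b0*b1 + 2*a1) * a1) / (a0*a0+a1*a1))
      by (field; exact Hn) end.
    rewrite E0, E1 in G. unfold Rdiv in G. lra.
  - match goal with |- ?L = _ => assert (G : L - 0 =
      ((2*a0*a1 + 2*b0*b1 + 2*a1) * a0 - (a0*a0 - a1*a1 + b0*b0 - b1*b1 + 2*a0) * a1) / (a0*a0+a1*a1))
      by (field; exact Hn) end.
    rewrite E0, E1 in G. unfold Rdiv in G. lra.
  - ring.
  - ring.
Qed.

Lemma sq0 x y : x*x+y*y = 0 -> x = 0 /\ y = 0.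
Proof. intro; split; nra. Qed.

Lemma mu_facts mu : is_complex mu -> mu <> qzero -> mu <> qone ->
  exists A0 A1 B0 B1, qsub (sfd_a mu) qone = mkQ A0 A1 0 0 /\ sfd_b mu = mkQ B0 B1 0 0 /\
    A0*A0+A1*A1 <> 0 /\ A0*A0 - A1*A1 + B0*B0 - B1*B1 + 2*A0 = 0 /\ 2*A0*A1 + 2*B0*B1 + 2*A1 = 0.
Proof.
  intros [H2 H3] Hz H1. destruct mu as [p q r s]; simpl in H2, H3; subst r s.
  assert (HN : p*p+q*q <> 0).
  { intro E. apply Hz. assert (p = 0) by nra. assert (q = 0) by nra. subst; reflexivity. }
  exists (q0 (qsub (sfd_a (mkQ p q 0 0)) qone)), (q1 (qsub (sfd_a (mkQ p q 0 0)) qone)),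
         (q0 (sfd_b (mkQ p q 0 0))), (q1 (sfd_b (mkQ p q 0 0))).
  unfold sfd_a, sfd_b, qinv, qnorm2, qdot; simpl.
  replace (p * p + q * q + 0 * 0 + 0 * 0) with (p*p+q*q) by ring.
  set (N := p*p+q*q) in *. assert (Hi : N * / N = 1) by (field; exact HN). set (i := / N) in *.
  repeat split.
  - apply quat_eq; simpl; ring.
  - apply quat_eq; simpl; ring.
  - intro E.
    apply sq0 in E. destruct E as [Ea Eb].
    assert (Ea' : p + i * p = 2) by lra. clear Ea. rename Ea' into Ea.
    assert (Eb' : q * (1 - i) = 0) by lra. clear Eb. rename Eb' into Eb.
    apply Rmult_integral in Eb. destruct Eb as [Eb|Eb].
    + subst q. assert (p * p * i = 1) by (unfold N in Hi; nra).
      assert ((p - 1) * (p - 1) = 0) by nra.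
      assert (p = 1) by nra. subst p. apply H1. reflexivity.
    + assert (Ei : i = 1) by lra. rewrite Ei in Ea, Hi. assert (p = 1) by lra. subst p.
      assert (q * q = 0) by (unfold N in Hi; nra). assert (q = 0) by nra. subst q. apply H1. reflexivity.
  - unfold i. unfold N. field. exact HN.
  - unfold i. unfold N. field. exact HN.
Qed.

Lemma red_facts mu : is_complex mu -> mu <> qzero -> mu <> qone ->
  exists A0 A1 C0 C1, qsub (sfd_a mu) qone = mkQ A0 A1 0 0 /\
    qmul (sfd_b mu) (qinv (qsub (sfd_a mu) qone)) = mkQ C0 C1 0 0 /\
    sfd_b mu = qmul (mkQ C0 C1 0 0) (mkQ A0 A1 0 0) /\
    qadd (mkQ A0 A1 0 0) (qmul (mkQ C0 C1 0 0) (qmul (mkQ C0 C1 0 0) (mkQ A0 A1 0 0))) = mkQ (-2) 0 0 0 /\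
    mkQ A0 A1 0 0 <> qzero.
Proof.
  intros Hc Hz H1. destruct (mu_facts mu Hc Hz H1) as (A0 & A1 & B0 & B1 & Ha & Hb & Hn & E0 & E1).
  assert (HC : qmul (sfd_b mu) (qinv (qsub (sfd_a mu) qone)) =
     mkQ ((B0*A0 + B1*A1)/(A0*A0+A1*A1)) ((B1*A0 - B0*A1)/(A0*A0+A1*A1)) 0 0).
  { rewrite Ha, Hb. unfold qinv, qnorm2, qdot; apply quat_eq; simpl;
    replace (A0 * A0 + A1 * A1 + 0 * 0 + 0 * 0) with (A0*A0+A1*A1) by ring; field; exact Hn. }
  assert (Anz : mkQ A0 A1 0 0 <> qzero).
  { intro E. injection E. intros. subst. apply Hn. ring. }
  exists A0, A1, ((B0*A0 + B1*A1)/(A0*A0+A1*A1)), ((B1*A0 - B0*A1)/(A0*A0+A1*A1)).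
  split; [exact Ha|]. split; [exact HC|].
  assert (HB : sfd_b mu = qmul (mkQ ((B0*A0 + B1*A1)/(A0*A0+A1*A1)) ((B1*A0 - B0*A1)/(A0*A0+A1*A1)) 0 0) (mkQ A0 A1 0 0)).
  { rewrite <- HC, <- Ha, qmul_assoc, qinv_l, qmul_1r. reflexivity. rewrite Ha. exact Anz. }
  split; [exact HB|]. split; [|exact Anz].
  apply H1_of; assumption.
Qed.

Lemma conf_alg mu m n u v : is_complex mu -> mu <> qzero -> mu <> qone -> m <> qzero -> n <> qzero ->
  qnorm2 u = qnorm2 v -> qdot u v = 0 -> u <> qzero ->
  let P := qmul (qmul m (qsub (sfd_a mu) qone)) (qinv m) in
  let Q := qmul (qmul m (sfd_b mu)) (qinv m) in
  let N := qmul (qmul n (qmul (sfd_b mu) (qinv (qsub (sfd_a mu) qone)))) (qinv n) in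
  qnorm2 (Lin P Q N u (qopp v)) = qnorm2 (Lin P Q N v u) /\
  qdot (Lin P Q N u (qopp v)) (Lin P Q N v u) = 0 /\ Lin P Q N u (qopp v) <> qzero.
Proof.
  intros Hc Hz H1 Hm Hn Huv Hd Hu P Q N.
  destruct (red_facts mu Hc Hz H1) as (A0 & A1 & C0 & C1 & Ha & HC & Hb & HH & Anz).
  unfold P, Q, N. rewrite HC, Ha, Hb. clear P Q N. rewrite <- Hb.
  rewrite !Lin_red by assumption. rewrite Hb.
  set (u' := qmul (qmul (qinv n) u) m). set (v' := qmul (qmul (qinv n) v) m).
  replace (qmul (qmul (qinv n) (qopp v)) m) with (qopp v') by (unfold v'; rewrite qmul_oppr, qmul_oppl; reflexivity).
  destruct (alg0 A0 A1 C0 C1 u' v' HH) as [E1 E2].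
  assert (Hu'v' : qnorm2 u' = qnorm2 v') by (unfold u', v'; rewrite !qnorm2_mul, Huv; reflexivity).
  assert (Hd' : qdot u' v' = 0) by (unfold u', v'; rewrite qdot_mulr, qdot_mull, Hd; ring).
  rewrite !qnorm2_mul. rewrite qdot_mulr, qdot_mull.
  split; [|split].
  - f_equal. f_equal. lra.
  - rewrite E2, Hd'. ring.
  - intro E0.
    assert (X0 : Lin (mkQ A0 A1 0 0) (qmul (mkQ C0 C1 0 0) (mkQ A0 A1 0 0)) (mkQ C0 C1 0 0) u' (qopp v') = qzero).
    { destruct (Req_dec (qnorm2 (Lin (mkQ A0 A1 0 0) (qmul (mkQ C0 C1 0 0) (mkQ A0 A1 0 0)) (mkQ C0 C1 0 0) u' (qopp v'))) 0) as [Z|Z].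
      - apply qnorm2_zero; exact Z.
      - exfalso. assert (qnorm2 (qmul (qmul n (Lin (mkQ A0 A1 0 0) (qmul (mkQ C0 C1 0 0) (mkQ A0 A1 0 0)) (mkQ C0 C1 0 0) u' (qopp v'))) (qinv m)) = 0)
          by (rewrite E0; unfold qnorm2, qdot; simpl; ring).
        rewrite !qnorm2_mul in H. pose proof (qnorm2_pos _ Hn). pose proof (qnorm2_pos _ (qinv_nz _ Hm)).
        pose proof (qnorm2_ge0 (Lin (mkQ A0 A1 0 0) (qmul (mkQ C0 C1 0 0) (mkQ A0 A1 0 0)) (mkQ C0 C1 0 0) u' (qopp v'))).
        apply Z. apply Rmult_integral in H. destruct H as [H|H]; [|lra]. apply Rmult_integral in H. destruct H as [H|H]; [lra|exact H]. }
    assert (Y0 : Lin (mkQ A0 A1 0 0) (qmul (mkQ C0 C1 0 0) (mkQ A0 A1 0 0)) (mkQ C0 C1 0 0) v' u' = qzero).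
    { apply qnorm2_zero. rewrite X0 in E1. unfold qnorm2 at 1 in E1. unfold qdot at 1 in E1. simpl in E1. lra. }
    pose proof (alg0_inj A0 A1 C0 C1 u' v' HH X0 Y0) as U0.
    apply (qmul_nz (qmul (qinv n) u) m); [apply qmul_nz; [apply qinv_nz; exact Hn| exact Hu]| exact Hm| exact U0].
Qed.

Lemma ccomm a b : is_complex a -> is_complex b -> qmul a b = qmul b a.
Proof. destruct a, b; intros [Ha Hb] [Hc Hd]; simpl in *; subst; apply quat_eq; simpl; ring. Qed.

Lemma conjz m z c : m <> qzero -> z <> qzero -> is_complex z -> is_complex c ->
  qmul (qmul (qmul m z) c) (qinv (qmul m z)) = qmul (qmul m c) (qinv m).
Proof.
  intros Hm Hz Cz Cc. rewrite qinv_mul by assumption.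
  rewrite !qmul_assoc. rewrite <- (qmul_assoc z c), (ccomm z c Cz Cc), qmul_assoc, cancel_l by exact Hz.
  reflexivity.
Qed.

Lemma conjj m c : m <> qzero -> is_complex c ->
  qmul (qmul (qmul m qj) (qconj c)) (qinv (qmul m qj)) = qmul (qmul m c) (qinv m).
Proof.
  intros Hm Cc. assert (Hj : qj <> qzero) by (intro E; injection E; lra).
  rewrite qinv_mul by assumption.
  rewrite !qmul_assoc.
  replace (qmul qj (qmul (qconj c) (qmul (qinv qj) (qinv m)))) with (qmul c (qmul qj (qmul (qinv qj) (qinv m)))).
  - rewrite cancel_l by exact Hj. reflexivity.
  - assert (Jc : qmul qj (qconj c) = qmul c qj).
    { destruct c; destruct Cc as [H2 H3]; simpl in *; subst. apply quat_eq; simpl; ring. }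
    rewrite <- (qmul_assoc qj (qconj c)), Jc, qmul_assoc. reflexivity.
Qed.

Lemma cplx_mk a b : is_complex (mkQ a b 0 0).
Proof. split; reflexivity. Qed.

Lemma cplx_mul a b : is_complex a -> is_complex b -> is_complex (qmul a b).
Proof. destruct a, b; intros [Ha Hb] [Hc Hd]; simpl in *; subst; split; simpl; ring. Qed.

Lemma part2 mu m n z w g gs x y : is_complex mu -> mu <> qzero -> mu <> qone -> m <> qzero -> n <> qzero ->
  is_complex z -> z <> qzero -> is_complex w -> w <> qzero ->
  simple_factor_dressing g gs mu (qmul m z) (qmul n w) x y = simple_factor_dressing g gs mu m n x y.
Proof.
  intros Hc Hz H1 Hm Hn Cz Zz Cw Zw.
  destruct (red_facts mu Hc Hz H1) as (A0 & A1 & C0 & C1 & Ha & HC & Hb & HH & Anz).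
  assert (Cb : is_complex (sfd_b mu)) by (rewrite Hb; apply cplx_mul; apply cplx_mk).
  assert (CC : is_complex (qmul (sfd_b mu) (qinv (qsub (sfd_a mu) qone)))) by (rewrite HC; apply cplx_mk).
  assert (Ca : is_complex (qsub (sfd_a mu) qone)) by (rewrite Ha; apply cplx_mk).
  rewrite !sfd_Lin. rewrite !conjz by assumption. reflexivity.
Qed.

Lemma mu_conj_a mu : is_complex mu -> mu <> qzero ->
  qsub (sfd_a (qinv (qconj mu))) qone = qconj (qsub (sfd_a mu) qone) /\
  sfd_b (qinv (qconj mu)) = qconj (sfd_b mu).
Proof.
  intros [H2 H3] Hz. destruct mu as [p q r s]; simpl in H2, H3; subst r s.
  assert (HN : p*p+q*q <> 0).
  { intro E. apply Hz. assert (p = 0) by nra. assert (q = 0) by nra. subst; reflexivity. }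
  unfold sfd_a, sfd_b, qinv, qnorm2, qdot; simpl.
  replace (p * p + q * q + 0 * 0 + 0 * 0) with (p*p+q*q) by ring.
  replace (p * p + - q * - q + - 0 * - 0 + - 0 * - 0) with (p*p+q*q) by ring.
  split; apply quat_eq; simpl; try field; try exact HN.

Qed.

Lemma conj_C x y : is_complex x -> is_complex y -> y <> qzero ->
  qmul (qconj x) (qinv (qconj y)) = qconj (qmul x (qinv y)).
Proof.
  intros [H2 H3] [H4 H5] Hy. destruct x as [a b c d], y as [e f g h]; simpl in *; subst.
  assert (HN : e*e+f*f <> 0).
  { intro E. apply Hy. assert (e = 0) by nra. assert (f = 0) by nra. subst; reflexivity. }
  unfold qinv, qnorm2, qdot; apply quat_eq; simpl;
  replace (e * e + - f * - f + - 0 * - 0 + - 0 * - 0) with (e*e+f*f) by ring;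
  replace (e * e + f * f + 0 * 0 + 0 * 0) with (e*e+f*f) by ring; field; exact HN.
Qed.

Lemma part3 mu m n g gs x y : is_complex mu -> mu <> qzero -> mu <> qone -> m <> qzero -> n <> qzero ->
  simple_factor_dressing g gs (qinv (qconj mu)) (qmul m qj) (qmul n qj) x y = simple_factor_dressing g gs mu m n x y.
Proof.
  intros Hc Hz H1 Hm Hn.
  destruct (red_facts mu Hc Hz H1) as (A0 & A1 & C0 & C1 & Ha & HC & Hb & HH & Anz).
  assert (Cb : is_complex (sfd_b mu)) by (rewrite Hb; apply cplx_mul; apply cplx_mk).
  assert (CC : is_complex (qmul (sfd_b mu) (qinv (qsub (sfd_a mu) qone)))) by (rewrite HC; apply cplx_mk).
  assert (Ca : is_complex (qsub (sfd_a mu) qone)) by (rewrite Ha; apply cplx_mk).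
  destruct (mu_conj_a mu Hc Hz) as [Ea Eb].
  rewrite !sfd_Lin. rewrite Ea, Eb. rewrite conj_C by (try assumption; rewrite Ha; exact Anz).
  rewrite !conjj by assumption. reflexivity.
Qed.

Lemma part4 mu m n g gs x y : is_complex mu -> mu <> qone -> m <> qzero -> n <> qzero -> qnorm2 mu = 1 ->
  simple_factor_dressing g gs mu m n x y = g x y.
Proof.
  intros [H2 H3] H1 Hm Hn HN. destruct mu as [p q r s]; simpl in H2, H3; subst r s.
  unfold qnorm2, qdot in HN; simpl in HN.
  assert (Hp : p - 1 <> 0).
  { intro E. assert (p = 1) by lra. subst p. assert (q = 0) by nra. subst q. apply H1; reflexivity. }
  assert (Ea : qsub (sfd_a (mkQ p q 0 0)) qone = mkQ (p-1) 0 0 0).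
  { unfold sfd_a, qinv, qnorm2, qdot; simpl; rewrite HN; apply quat_eq; simpl; field. }
  assert (Eb : sfd_b (mkQ p q 0 0) = mkQ q 0 0 0).
  { unfold sfd_b, qinv, qnorm2, qdot; simpl; rewrite HN; apply quat_eq; simpl; field. }
  assert (EC : qmul (mkQ q 0 0 0) (qinv (mkQ (p-1) 0 0 0)) = mkQ (q/(p-1)) 0 0 0).
  { unfold qinv, qnorm2, qdot; simpl; apply quat_eq; simpl; field; exact Hp. }
  assert (Rc : forall r, qmul (qmul m (mkQ r 0 0 0)) (qinv m) = mkQ r 0 0 0).
  { intro r. replace (qmul m (mkQ r 0 0 0)) with (qmul (mkQ r 0 0 0) m) by (destruct m; apply quat_eq; simpl; ring).
    rewrite qmul_assoc, qinv_r, qmul_1r by exact Hm. reflexivity. }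
  assert (Rc' : forall r, qmul (qmul n (mkQ r 0 0 0)) (qinv n) = mkQ r 0 0 0).
  { intro r. replace (qmul n (mkQ r 0 0 0)) with (qmul (mkQ r 0 0 0) n) by (destruct n; apply quat_eq; simpl; ring).
    rewrite qmul_assoc, qinv_r, qmul_1r by exact Hn. reflexivity. }
  rewrite sfd_Lin, Ea, Eb, EC, Rc, Rc, Rc'.
  destruct (g x y) as [v0 v1 v2 v3], (gs x y) as [w0 w1 w2 w3]. unfold Lin. apply quat_eq; simpl.
  all: match goal with |- ?L = ?V => assert (G : L - V = - V * (p * p + q * q + 0 * 0 + 0 * 0 - 1) / (2 * (p - 1)))
     by (field; exact Hp) end; rewrite HN in G; unfold Rdiv in G; lra.
Qed.

Lemma dl_plus f g x l1 l2 : derivable_pt_lim f x l1 -> derivable_pt_lim g x l2 ->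
  derivable_pt_lim (fun t => f t + g t) x (l1 + l2).
Proof. intros; apply (derivable_pt_lim_plus f g); assumption. Qed.
Lemma dl_minus f g x l1 l2 : derivable_pt_lim f x l1 -> derivable_pt_lim g x l2 ->
  derivable_pt_lim (fun t => f t - g t) x (l1 - l2).
Proof. intros; apply (derivable_pt_lim_minus f g); assumption. Qed.
Lemma dl_opp f x l : derivable_pt_lim f x l -> derivable_pt_lim (fun t => - f t) x (- l).
Proof. intros; apply (derivable_pt_lim_opp f); assumption. Qed.
Lemma dl_cl c f x l : derivable_pt_lim f x l -> derivable_pt_lim (fun t => c * f t) x (c * l).
Proof. intros; apply (derivable_pt_lim_scal f c); assumption. Qed.
Lemma dl_cr c f x l : derivable_pt_lim f x l -> derivable_pt_lim (fun t => f t * c) x (l * c).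
Proof. intros H. replace (l * c) with (c * l) by ring.
  assert (E : (fun t => f t * c) = (fun t => c * f t)) by (apply FunctionalExtensionality.functional_extensionality; intro; ring).
  rewrite E. apply dl_cl; exact H. Qed.

Definition hasd (F : R -> quat) (x : R) (d : quat) : Prop :=
  derivable_pt_lim (fun t => q0 (F t)) x (q0 d) /\
  derivable_pt_lim (fun t => q1 (F t)) x (q1 d) /\
  derivable_pt_lim (fun t => q2 (F t)) x (q2 d) /\
  derivable_pt_lim (fun t => q3 (F t)) x (q3 d).

Ltac dsolve := repeat first [ apply dl_plus | apply dl_minus | apply dl_opp | apply dl_cl | apply dl_cr | assumption ].

Lemma Lin_hasd P Q N F G x d e : hasd F x d -> hasd G x e ->
  hasd (fun t => Lin P Q N (F t) (G t)) x (Lin P Q N d e).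
Proof.
  intros (F0 & F1 & F2 & F3) (G0 & G1 & G2 & G3). unfold hasd, Lin; simpl.
  repeat split; dsolve.
Qed.

Lemma opp_hasd F x d : hasd F x d -> hasd (fun t => qopp (F t)) x (qopp d).
Proof. intros (F0 & F1 & F2 & F3). unfold hasd; simpl. repeat split; dsolve. Qed.

Definition contS (F : R -> R -> R) (x y : R) : Prop :=
  forall eps, 0 < eps -> exists del, 0 < del /\
    (forall x' y', (x' - x) ^ 2 + (y' - y) ^ 2 < del ^ 2 -> Rabs (F x' y' - F x y) < eps).

Lemma ball_min d1 d2 z : 0 < d1 -> 0 < d2 -> z < (Rmin d1 d2)^2 -> z < d1^2 /\ z < d2^2.
Proof.
  intros H1 H2 H. pose proof (Rmin_l d1 d2). pose proof (Rmin_r d1 d2).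
  assert (0 < Rmin d1 d2) by (apply Rmin_pos; lra). split; nra.
Qed.

Lemma contS_plus F G x y : contS F x y -> contS G x y -> contS (fun a b => F a b + G a b) x y.
Proof.
  intros HF HG eps He. destruct (HF (eps/2)) as (d1 & Hd1 & H1); [lra|].
  destruct (HG (eps/2)) as (d2 & Hd2 & H2); [lra|].
  exists (Rmin d1 d2). split; [apply Rmin_pos; lra|]. intros x' y' Hb.
  destruct (ball_min _ _ _ Hd1 Hd2 Hb) as [B1 B2]. specialize (H1 _ _ B1). specialize (H2 _ _ B2).
  replace (F x' y' + G x' y' - (F x y + G x y)) with ((F x' y' - F x y) + (G x' y' - G x y)) by ring.
  eapply Rle_lt_trans; [apply Rabs_triang|]. lra.
Qed.

Lemma contS_opp F x y : contS F x y -> contS (fun a b => - F a b) x y.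
Proof.
  intros HF eps He. destruct (HF eps He) as (d & Hd & H). exists d; split; [exact Hd|].
  intros x' y' Hb. replace (- F x' y' - - F x y) with (- (F x' y' - F x y)) by ring.
  rewrite Rabs_Ropp. apply H; exact Hb.
Qed.

Lemma contS_minus F G x y : contS F x y -> contS G x y -> contS (fun a b => F a b - G a b) x y.
Proof. intros HF HG. apply (contS_plus F (fun a b => - G a b)); [exact HF| apply contS_opp; exact HG]. Qed.

Lemma contS_cl c F x y : contS F x y -> contS (fun a b => c * F a b) x y.
Proof.
  intros HF eps He. pose proof (Rabs_pos c) as Hc0.
  destruct (HF (eps / (Rabs c + 1))) as (d & Hd & H). { apply Rdiv_lt_0_compat; lra. }
  exists d; split; [exact Hd|]. intros x' y' Hb. specialize (H _ _ Hb).
  replace (c * F x' y' - c * F x y) with (c * (F x' y' - F x y)) by ring. rewrite Rabs_mult.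
  assert (Rabs c * Rabs (F x' y' - F x y) <= Rabs c * (eps / (Rabs c + 1))).
  { apply Rmult_le_compat_l; lra. }
  assert (Rabs c * (eps / (Rabs c + 1)) < eps).
  { unfold Rdiv. apply (Rmult_lt_reg_r (Rabs c + 1)); [lra|].
    rewrite Rmult_assoc, Rmult_assoc, Rinv_l by lra. nra. }
  lra.
Qed.

Lemma contS_cr c F x y : contS F x y -> contS (fun a b => F a b * c) x y.
Proof.
  intros HF. assert (E : (fun a b => F a b * c) = (fun a b => c * F a b)).
  { apply FunctionalExtensionality.functional_extensionality; intro;
    apply FunctionalExtensionality.functional_extensionality; intro; ring. }
  rewrite E. apply contS_cl; exact HF.
Qed.

Lemma abs_lt_sq c e : 0 < e -> c * c < e * e -> Rabs c < e.
Proof. intros He H. unfold Rabs; destruct (Rcase_abs c); nra. Qed.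

Lemma sq_le4 a b c d e : a*a+b*b+c*c+d*d < e^2 -> 0 < e -> Rabs a < e /\ Rabs b < e /\ Rabs c < e /\ Rabs d < e.
Proof. intros H He. replace (e^2) with (e*e) in H by ring. repeat split; apply abs_lt_sq; auto; nra. Qed.

Lemma cont2_comp h x y : cont2 h x y ->
  contS (fun a b => q0 (h a b)) x y /\ contS (fun a b => q1 (h a b)) x y /\
  contS (fun a b => q2 (h a b)) x y /\ contS (fun a b => q3 (h a b)) x y.
Proof.
  intros H. repeat split; intros eps He; destruct (H eps He) as (d & Hd & Hb); exists d; split; auto;
  intros x' y' B; specialize (Hb _ _ B); unfold qnorm2, qdot, qsub, qadd, qopp in Hb; simpl in Hb;
  destruct (sq_le4 _ _ _ _ _ Hb He) as (K0 & K1 & K2 & K3); assumption.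
Qed.

Lemma abs_sq x r : Rabs x < r -> x * x < r * r.
Proof. intro H. apply Rabs_def2 in H. nra. Qed.

Lemma comp_cont2 h x y :
  contS (fun a b => q0 (h a b)) x y -> contS (fun a b => q1 (h a b)) x y ->
  contS (fun a b => q2 (h a b)) x y -> contS (fun a b => q3 (h a b)) x y -> cont2 h x y.
Proof.
  intros H0 H1 H2 H3 eps He.
  destruct (H0 (eps/2)) as (d0 & Hd0 & B0); [lra|].
  destruct (H1 (eps/2)) as (d1 & Hd1 & B1); [lra|].
  destruct (H2 (eps/2)) as (d2 & Hd2 & B2); [lra|].
  destruct (H3 (eps/2)) as (d3 & Hd3 & B3); [lra|].
  exists (Rmin (Rmin d0 d1) (Rmin d2 d3)). split. { repeat apply Rmin_pos; lra. }
  intros x' y' B.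
  destruct (ball_min (Rmin d0 d1) (Rmin d2 d3) _ ltac:(apply Rmin_pos; lra) ltac:(apply Rmin_pos; lra) B) as [Ba Bb].
  destruct (ball_min _ _ _ Hd0 Hd1 Ba) as [C0 C1]. destruct (ball_min _ _ _ Hd2 Hd3 Bb) as [C2 C3].
  specialize (B0 _ _ C0). specialize (B1 _ _ C1). specialize (B2 _ _ C2). specialize (B3 _ _ C3).
  unfold qnorm2, qdot, qsub, qadd, qopp; simpl.
  revert B0 B1 B2 B3. generalize (q0 (h x' y')) (q1 (h x' y')) (q2 (h x' y')) (q3 (h x' y')) (q0 (h x y)) (q1 (h x y)) (q2 (h x y)) (q3 (h x y)).
  intros a0 a1 a2 a3 b0 b1 b2 b3 B0 B1 B2 B3.
  apply abs_sq in B0; apply abs_sq in B1; apply abs_sq in B2; apply abs_sq in B3.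
  replace (eps ^ 2) with (eps * eps) by ring. unfold Rminus in *. lra.
Qed.

Ltac csolve := repeat first [ apply contS_plus | apply contS_minus | apply contS_opp | apply contS_cl | apply contS_cr | assumption ].

Lemma Lin_cont2 P Q N F G x y : cont2 F x y -> cont2 G x y ->
  cont2 (fun a b => Lin P Q N (F a b) (G a b)) x y.
Proof.
  intros HF HG. destruct (cont2_comp F x y HF) as (F0 & F1 & F2 & F3).
  destruct (cont2_comp G x y HG) as (G0 & G1 & G2 & G3).
  apply comp_cont2; unfold Lin; simpl; csolve.
Qed.

Lemma opp_cont2 F x y : cont2 F x y -> cont2 (fun a b => qopp (F a b)) x y.
Proof.
  intros HF. destruct (cont2_comp F x y HF) as (F0 & F1 & F2 & F3).
  apply comp_cont2; simpl; csolve.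
Qed.

From Coquelicot Require Import Coquelicot.

Lemma loc_of (u : R) (P : R -> Prop) (e : R) : 0 < e -> (forall z, Rabs (z - u) < e -> P z) -> locally u P.
Proof. intros He H. exists (mkposreal e He). intros z Hz. apply H. exact Hz. Qed.

Lemma box_ball u v x y r : 0 < r -> Rabs (u - x) < r / 2 -> Rabs (v - y) < r / 2 -> (u - x) ^ 2 + (v - y) ^ 2 < r ^ 2.
Proof. intros Hr H1 H2. apply Rabs_def2 in H1. apply Rabs_def2 in H2. nra. Qed.

Lemma open_x U u v : open2 U -> U u v -> exists e, 0 < e /\ forall z, Rabs (z - u) < e -> U z v.
Proof.
  intros HU Huv. destruct (HU u v Huv) as (e & He & H). exists e. split; [exact He|].
  intros z Hz. apply H. apply Rabs_def2 in Hz. nra.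
Qed.
Lemma open_y U u v : open2 U -> U u v -> exists e, 0 < e /\ forall z, Rabs (z - v) < e -> U u z.
Proof.
  intros HU Huv. destruct (HU u v Huv) as (e & He & H). exists e. split; [exact He|].
  intros z Hz. apply H. apply Rabs_def2 in Hz. nra.
Qed.

Definition HDp (U : R -> R -> Prop) (F Fx Fy Fxy Fyx : R -> R -> R) : Prop := forall u v, U u v ->
  derivable_pt_lim (fun t => F t v) u (Fx u v) /\ derivable_pt_lim (fun t => F u t) v (Fy u v) /\
  derivable_pt_lim (fun t => Fx u t) v (Fxy u v) /\ derivable_pt_lim (fun t => Fy t v) u (Fyx u v) /\
  contS Fxy u v /\ contS Fyx u v.

Lemma Dy (U : R -> R -> Prop) (F Fx Fy Fxy Fyx : R -> R -> R) (HU : open2 U) (HD : HDp U F Fx Fy Fxy Fyx) u v : U u v -> Derive (fun t => F u t) v = Fy u v.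
Proof. intro H. apply is_derive_unique. apply is_derive_Reals. apply (HD u v H). Qed.
Lemma Dx (U : R -> R -> Prop) (F Fx Fy Fxy Fyx : R -> R -> R) (HU : open2 U) (HD : HDp U F Fx Fy Fxy Fyx) u v : U u v -> Derive (fun t => F t v) u = Fx u v.
Proof. intro H. apply is_derive_unique. apply is_derive_Reals. apply (HD u v H). Qed.

Lemma locDy (U : R -> R -> Prop) (F Fx Fy Fxy Fyx : R -> R -> R) (HU : open2 U) (HD : HDp U F Fx Fy Fxy Fyx) u v : U u v -> locally u (fun z => Fy z v = Derive (fun t => F z t) v).
Proof.
  intro H. destruct (open_x U u v HU H) as (e & He & Hz). apply (loc_of u _ e He).
  intros z Hz'. symmetry. apply (Dy U F Fx Fy Fxy Fyx HU HD). apply Hz; exact Hz'.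
Qed.
Lemma locDx (U : R -> R -> Prop) (F Fx Fy Fxy Fyx : R -> R -> R) (HU : open2 U) (HD : HDp U F Fx Fy Fxy Fyx) u v : U u v -> locally v (fun z => Fx u z = Derive (fun t => F t z) u).
Proof.
  intro H. destruct (open_y U u v HU H) as (e & He & Hz). apply (loc_of v _ e He).
  intros z Hz'. symmetry. apply (Dx U F Fx Fy Fxy Fyx HU HD). apply Hz; exact Hz'.
Qed.

Lemma DD1 (U : R -> R -> Prop) (F Fx Fy Fxy Fyx : R -> R -> R) (HU : open2 U) (HD : HDp U F Fx Fy Fxy Fyx) u v : U u v -> Derive (fun z => Derive (fun t => F z t) v) u = Fyx u v.
Proof.
  intro H. transitivity (Derive (fun z => Fy z v) u).
  { symmetry. apply Derive_ext_loc. exact (locDy U F Fx Fy Fxy Fyx HU HD u v H). }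
  apply is_derive_unique. apply is_derive_Reals. apply (HD u v H).
Qed.
Lemma DD2 (U : R -> R -> Prop) (F Fx Fy Fxy Fyx : R -> R -> R) (HU : open2 U) (HD : HDp U F Fx Fy Fxy Fyx) u v : U u v -> Derive (fun z => Derive (fun t => F t z) u) v = Fxy u v.
Proof.
  intro H. transitivity (Derive (fun z => Fx u z) v).
  { symmetry. apply Derive_ext_loc. exact (locDx U F Fx Fy Fxy Fyx HU HD u v H). }
  apply is_derive_unique. apply is_derive_Reals. apply (HD u v H).
Qed.

Lemma schwarz_scalar (U : R -> R -> Prop) (F Fx Fy Fxy Fyx : R -> R -> R) (HU : open2 U) (HD : HDp U F Fx Fy Fxy Fyx) x y : U x y -> Fxy x y = Fyx x y.
Proof.
  intro Hxy. destruct (HU x y Hxy) as (r & Hr & Hball).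
  assert (Hbox : forall u v, Rabs (u - x) < r/2 -> Rabs (v - y) < r/2 -> U u v)
    by (intros u v H1 H2; apply Hball; apply box_ball; assumption).
  pose proof (Schwarz F x y) as S.
  rewrite (DD1 U F Fx Fy Fxy Fyx HU HD), (DD2 U F Fx Fy Fxy Fyx HU HD) in S by exact Hxy. symmetry. apply S.
  - exists (mkposreal (r/2) ltac:(lra)). intros u v H1 H2. simpl in H1, H2.
    pose proof (Hbox u v H1 H2) as Huv. repeat split.
    + exists (Fx u v). apply is_derive_Reals. apply (HD u v Huv).
    + exists (Fy u v). apply is_derive_Reals. apply (HD u v Huv).
    + apply (ex_derive_ext_loc (fun z => Fy z v)); [apply (locDy U F Fx Fy Fxy Fyx HU HD); exact Huv|].
      exists (Fyx u v). apply is_derive_Reals. apply (HD u v Huv).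
    + apply (ex_derive_ext_loc (fun z => Fx u z)); [apply (locDx U F Fx Fy Fxy Fyx HU HD); exact Huv|].
      exists (Fxy u v). apply is_derive_Reals. apply (HD u v Huv).
  - intro eps. destruct (proj2 (proj2 (proj2 (proj2 (proj2 (HD x y Hxy))))) eps (cond_pos eps)) as (d & Hd & Hc).
    exists (mkposreal (Rmin d r / 2) ltac:(apply Rdiv_lt_0_compat; [apply Rmin_pos|]; lra)).
    intros u v H1 H2. simpl in H1, H2.
    pose proof (Rmin_l d r). pose proof (Rmin_r d r). pose proof (Rmin_pos d r Hd Hr).
    assert (Huv : U u v) by (apply Hbox; lra).
    rewrite (DD1 U F Fx Fy Fxy Fyx HU HD) by exact Huv. rewrite (DD1 U F Fx Fy Fxy Fyx HU HD) by exact Hxy. apply Hc.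
    assert (B : (u - x) ^ 2 + (v - y) ^ 2 < (Rmin d r) ^ 2) by (apply box_ball; assumption).
    nra.
  - intro eps. destruct (proj1 (proj2 (proj2 (proj2 (proj2 (HD x y Hxy))))) eps (cond_pos eps)) as (d & Hd & Hc).
    exists (mkposreal (Rmin d r / 2) ltac:(apply Rdiv_lt_0_compat; [apply Rmin_pos|]; lra)).
    intros u v H1 H2. simpl in H1, H2.
    pose proof (Rmin_l d r). pose proof (Rmin_r d r). pose proof (Rmin_pos d r Hd Hr).
    assert (Huv : U u v) by (apply Hbox; lra).
    rewrite (DD2 U F Fx Fy Fxy Fyx HU HD) by exact Huv. rewrite (DD2 U F Fx Fy Fxy Fyx HU HD) by exact Hxy. apply Hc.
    assert (B : (u - x) ^ 2 + (v - y) ^ 2 < (Rmin d r) ^ 2) by (apply box_ball; assumption).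
    nra.
Qed.

Lemma mixed_eq U f gx gy gxx gxy gyx gyy : open2 U ->
  (forall x y, U x y ->
      has_dx f x y (gx x y) /\ has_dy f x y (gy x y) /\
      has_dx gx x y (gxx x y) /\ has_dy gx x y (gxy x y) /\
      has_dx gy x y (gyx x y) /\ has_dy gy x y (gyy x y) /\
      cont2 gxx x y /\ cont2 gxy x y /\ cont2 gyx x y /\ cont2 gyy x y) ->
  forall x y, U x y -> gxy x y = gyx x y.
Proof.
  intros HU Hf x y Hxy.
  assert (K : forall (k : quat -> R),
    (forall u v, U u v ->
      derivable_pt_lim (fun t => k (f t v)) u (k (gx u v)) /\ derivable_pt_lim (fun t => k (f u t)) v (k (gy u v)) /\
      derivable_pt_lim (fun t => k (gx u t)) v (k (gxy u v)) /\ derivable_pt_lim (fun t => k (gy t v)) u (k (gyx u v)) /\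
      contS (fun a b => k (gxy a b)) u v /\ contS (fun a b => k (gyx a b)) u v) ->
    k (gxy x y) = k (gyx x y)).
  { intros k Hk. exact (schwarz_scalar U (fun a b => k (f a b)) (fun a b => k (gx a b)) (fun a b => k (gy a b))
      (fun a b => k (gxy a b)) (fun a b => k (gyx a b)) HU Hk x y Hxy). }
  apply quat_eq; apply K; intros u v Huv;
  destruct (Hf u v Huv) as (D1 & D2 & D3 & D4 & D5 & D6 & C1 & C2 & C3 & C4);
  destruct D1 as (D1a & D1b & D1c & D1d); destruct D2 as (D2a & D2b & D2c & D2d);
  destruct D4 as (D4a & D4b & D4c & D4d); destruct D5 as (D5a & D5b & D5c & D5d);
  destruct (cont2_comp _ _ _ C2) as (C2a & C2b & C2c & C2d);
  destruct (cont2_comp _ _ _ C3) as (C3a & C3b & C3c & C3d);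
  repeat split; assumption.
Qed.

Theorem mainTheorem9
  (U : R -> R -> Prop) (f fs : R -> R -> quat) (mu m n : quat) :
  open2 U ->
  minimal_conformal_immersion U f ->
  conjugate_surface U f fs ->
  is_complex mu -> mu <> qzero -> mu <> qone ->
  m <> qzero -> n <> qzero ->
  (* the dressed surface is minimal *)
  minimal_conformal_immersion U (simple_factor_dressing f fs mu m n) /\
  (* invariance under (mu,m,n) -> (mu, m z, n w), z, w in C_* *)
  (forall z w : quat, is_complex z -> z <> qzero ->
                      is_complex w -> w <> qzero ->
     forall x y, U x y ->
       simple_factor_dressing f fs mu (qmul m z) (qmul n w) x y
       = simple_factor_dressing f fs mu m n x y) /\
  (* invariance under (mu,m,n) -> (conj(mu)^-1, m j, n j) *)
  (forall x y, U x y ->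
     simple_factor_dressing f fs (qinv (qconj mu)) (qmul m qj) (qmul n qj) x y
     = simple_factor_dressing f fs mu m n x y) /\
  (* mu in S^1 \ {1}  ==>  f-hat = f *)
  (qnorm2 mu = 1 ->
     forall x y, U x y -> simple_factor_dressing f fs mu m n x y = f x y).
Proof.
  intros HU Hmin Hconj Hc Hz H1 Hm Hn.
  split; [|split; [|split]].
  2: { intros z w Cz Zz Cw Zw x y _. apply part2; assumption. }
  2: { intros x y _. apply part3; assumption. }
  2: { intros HN x y _. apply part4; assumption. }
  destruct Hmin as (gx & gy & gxx & gxy & gyx & gyy & Hf).
  set (P := qmul (qmul m (qsub (sfd_a mu) qone)) (qinv m)).
  set (Q := qmul (qmul m (sfd_b mu)) (qinv m)).
  set (N := qmul (qmul n (qmul (sfd_b mu) (qinv (qsub (sfd_a mu) qone)))) (qinv n)).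
  assert (Hmix : forall x y, U x y -> gxy x y = gyx x y).
  { apply (mixed_eq U f gx gy gxx gxy gyx gyy HU). intros x y Hxy.
    destruct (Hf x y Hxy) as (D1 & D2 & D3 & D4 & D5 & D6 & C1 & C2 & C3 & C4 & _).
    exact (conj D1 (conj D2 (conj D3 (conj D4 (conj D5 (conj D6 (conj C1 (conj C2 (conj C3 C4))))))))). }
  exists (fun x y => Lin P Q N (gx x y) (qopp (gy x y))), (fun x y => Lin P Q N (gy x y) (gx x y)),
         (fun x y => Lin P Q N (gxx x y) (qopp (gyx x y))), (fun x y => Lin P Q N (gxy x y) (qopp (gyy x y))),
         (fun x y => Lin P Q N (gyx x y) (gxx x y)), (fun x y => Lin P Q N (gyy x y) (gxy x y)).
  intros x y Hxy.
  destruct (Hf x y Hxy) as (D1 & D2 & D3 & D4 & D5 & D6 & C1 & C2 & C3 & C4 & Lap & Nm & Dt & Nz).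
  destruct (Hconj x y Hxy) as [Cj1 Cj2].
  pose proof (Cj1 _ D2) as Ds1. pose proof (Cj2 _ D1) as Ds2.
  destruct (conf_alg mu m n (gx x y) (gy x y) Hc Hz H1 Hm Hn Nm Dt Nz) as (K1 & K2 & K3).
  fold P Q N in K1, K2, K3.
  refine (conj _ (conj _ (conj _ (conj _ (conj _ (conj _ (conj _ (conj _ (conj _ (conj _ (conj _ (conj _ (conj _ _))))))))))))).
  all: try exact (Lin_hasd P Q N (fun t => f t y) (fun t => fs t y) x _ _ D1 Ds1).
  all: try exact (Lin_hasd P Q N (fun t => f x t) (fun t => fs x t) y _ _ D2 Ds2).
  all: try exact (Lin_hasd P Q N (fun t => gx t y) (fun t => qopp (gy t y)) x _ _ D3 (opp_hasd _ _ _ D5)).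
  all: try exact (Lin_hasd P Q N (fun t => gx x t) (fun t => qopp (gy x t)) y _ _ D4 (opp_hasd _ _ _ D6)).
  all: try exact (Lin_hasd P Q N (fun t => gy t y) (fun t => gx t y) x _ _ D5 D3).
  all: try exact (Lin_hasd P Q N (fun t => gy x t) (fun t => gx x t) y _ _ D6 D4).
  all: try exact (Lin_cont2 P Q N gxx (fun a b => qopp (gyx a b)) x y C1 (opp_cont2 _ _ _ C3)).
  all: try exact (Lin_cont2 P Q N gxy (fun a b => qopp (gyy a b)) x y C2 (opp_cont2 _ _ _ C4)).
  all: try exact (Lin_cont2 P Q N gyx gxx x y C3 C1).
  all: try exact (Lin_cont2 P Q N gyy gxy x y C4 C2).
  all: try exact K1. all: try exact K2. all: try exact K3.
  rewrite Lin_add, Lap, (Hmix x y Hxy).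
  replace (qadd (qopp (gyx x y)) (gyx x y)) with qzero by (destruct (gyx x y); apply quat_eq; simpl; ring).
  apply Lin_00.
Qed.
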